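(* Let $a_1,\dots,a_{12}$ be positive real numbers that can be partitioned into four triples such that each triple consists of the side lengths of a non-degenerate triangle. Then $a_1,\dots,a_{12}$ can be partitioned into three quadruples such that each quadruple consists of the side lengths of a non-degenerate (planar) quadrilateral.
   Context: Three positive reals are the side lengths of a non-degenerate triangle iff the largest is strictly less than the sum of the other two. Four positive reals are the side lengths of a non-degenerate quadrilateral iff the largest is strictly less than the sum of the other three. *)

(* Defs.v *)
From HB Require Import structures.
From mathcomp Require Import all_boot all_order all_algebra.
Set Implicit Arguments. Unset Strict Implicit. Unset Printing Implicit Defensive.
Import Order.TTheory GRing.Theory Num.Theory.
Local Open Scope ring_scope.

Definition polygon_sides (R : realFieldType) (n : nat) (a : 'I_n -> R)
    (S : {set 'I_n}) : Prop :=
  exists2 i, i \in S &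
    (forall j, j \in S -> a j <= a i) /\ a i < \sum_(j in S | j != i) a j.

Definition blocks_of_size (n m k : nat) (p : 'I_n -> 'I_m) : Prop :=
  forall b : 'I_m, #|[set i | p i == b]| = k.

(* Main.v *)
Require Import Defs.
From HB Require Import structures.
From mathcomp Require Import all_boot all_order all_algebra.
Import Order.TTheory GRing.Theory Num.Theory.
Local Open Scope ring_scope.

Lemma sumU1_neq (R : realFieldType) (n : nat) (F : 'I_n -> R) (A : {set 'I_n}) w i :
  w \notin A -> w != i ->
  \sum_(j in w |: A | j != i) F j = F w + \sum_(j in A | j != i) F j.
Proof.
move=> wA wi; rewrite (bigD1 w) /=; last by rewrite setU11 wi.
congr (_ + _); apply: eq_bigl => j; rewrite in_setU1.
by case: (eqVneq j w) => [->|] /=; rewrite ?(negPf wA) ?andbF ?andbT.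
Qed.

Theorem mainTheorem1 (R : realFieldType) (a : 'I_12 -> R)
  (hpos : forall i, 0 < a i)
  (htri : exists p : 'I_12 -> 'I_4, blocks_of_size 3 p /\
            forall b : 'I_4, polygon_sides a [set i | p i == b]) :
  exists q : 'I_12 -> 'I_3, blocks_of_size 4 q /\
    forall b : 'I_3, polygon_sides a [set i | q i == b].
Proof.
case: htri => p [hp hpol].
have /fin_all_exists [top htop] : forall b : 'I_4, exists t : 'I_12,
    t \in [set i | p i == b] /\
    (forall j, j \in [set i | p i == b] -> a j <= a t) /\
    a t < \sum_(j in [set i | p i == b] | j != t) a j.
  move=> b; case: (hpol b) => i hi [h1 h2]; by exists i.
set b0 := [arg min_(b < ord0) a (top b)]%O.
have hb0 : forall b, a (top b0) <= a (top b).
  rewrite /b0; case: arg_minP => //= i _ H b; exact: H.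
set S := [set i | p i == b0].
set e := enum S.
have se : size e = 3%N by rewrite /e -cardE hp.
pose g (i : 'I_12) : 'I_3 := inord (index i e).
pose q i := if p i == b0 then g i else odflt ord0 (unlift b0 (p i)).
pose wc (c : 'I_3) := nth ord0 e c.
have wcS c : wc c \in S.
  by rewrite -mem_enum /wc mem_nth // se.
have key c : [set i | q i == c] = wc c |: [set i | p i == lift b0 c].
  apply/setP => i; rewrite !inE /q.
  case: ifP => hi.
  - rewrite (eqP hi) (negPf (neq_lift _ _)) orbF.
    have ie : i \in e by rewrite mem_enum inE hi.
    have il : (index i e < 3)%N by move: ie; rewrite -index_mem se.
    apply/eqP/eqP => [<- | ->].
      by rewrite /wc /g inordK // nth_index.
    apply: val_inj; rewrite /= inordK /wc; last by rewrite index_uniq ?enum_uniq ?se.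
    by rewrite index_uniq ?enum_uniq // se.
  - have -> : (i == wc c) = false.
      apply/negbTE/eqP => E; move: (wcS c); rewrite -E inE hi //.
    rewrite /=; move: hi; case: unliftP => [k -> _ | -> ]; last by rewrite eqxx.
    by rewrite /= (inj_eq lift_inj).
have wnot c : wc c \notin [set i | p i == lift b0 c].
  apply/negP; rewrite inE => /eqP E; move: (wcS c); rewrite inE E.
  by rewrite eq_sym (negPf (neq_lift _ _)).
exists q; split.
  by move=> c; rewrite key cardsU1 wnot hp.
move=> c; rewrite key.
set b := lift b0 c.
have [t1 [t2 t3]] := htop b.
exists (top b); first by rewrite in_setU1 t1 orbT.
split.
  move=> j; rewrite in_setU1 => /orP [/eqP -> |]; last exact: t2.
  apply: le_trans (hb0 b); exact: (proj1 (proj2 (htop b0))).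
rewrite sumU1_neq //; last first.
  by apply/eqP => E; move: (wnot c); rewrite E t1.
by apply: (lt_le_trans t3); rewrite lerDr ltW.
Qed.
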